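(* Let $d,n,r\ge1$, $\mathbf r=(r,\dots,r)\in\mathbb{N}^d$, $\theta\ge0$, $0<\varepsilon,\mu<1$ and $R\ge1$. Then the set $\mathcal{B}_{R,\mu,\theta,\mathbf r}$ of $d$-mode tensors in $\mathbb{R}^{n\times\cdots\times n}$ satisfies $$\mathcal{N}(\mathcal{B}_{R,\mu,\theta,\mathbf r},\|\cdot\|_F,\varepsilon)\le\Big(\frac{6(d+1)}{\varepsilon}\Big)^{r^d+rnd}(R^2+\mu r)^{r^dd/2}(R^2+\mu r^d)^{dnr/2}R^{(d-1)dnr}.$$
   Context: For $R\ge0$, $\mu,\theta\ge0$, $\mathcal{B}_{R,\mu,\theta,\mathbf r}$ is the set of $\mathcal{X}\in\mathbb{R}^{n\times\cdots\times n}$ ($d$ modes) that can be written $\mathcal{X}=\sum_{k_1,\dots,k_d=1}^{r}\mathcal{C}(k_1,\dots,k_d)\,\mathbf{u}^1_{k_1}\circ\cdots\circ\mathbf{u}^d_{k_d}$ ($\circ$ outer product, $\mathbf{u}^i_k\in\mathbb{R}^n$) such that (a) $\|\mathbf{u}^i_k\|_2\le R$ for all $i,k$; (b) $|\langle\mathbf{u}^i_k,\mathbf{u}^i_{k'}\rangle|\le\mu$ for all $i$, $k\ne k'$; (c) $\|\mathcal{C}\|_F=1$; (d) for each $i$ and $p\ne q$, $\sum_{k_j,\,j\ne i}\mathcal{C}(k_1,\dots,p,\dots,k_d)\mathcal{C}(k_1,\dots,q,\dots,k_d)=0$ ($p,q$ in position $i$); (e) $\|\mathcal{X}\|_F\ge\theta$.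 $\mathcal{N}(\mathcal{S},\|\cdot\|_F,t)$ is the minimal cardinality of a subset of $\mathcal{S}$ such that every element of $\mathcal{S}$ is within Frobenius distance $t$ of some element of the subset. *)

(* Defs.v *)
From HB Require Import structures.
From mathcomp Require Import all_boot all_order all_algebra.
From mathcomp Require Import all_classical all_reals all_analysis.
Set Implicit Arguments. Unset Strict Implicit. Unset Printing Implicit Defensive.
Import Order.TTheory GRing.Theory Num.Theory.
Local Open Scope ring_scope.
Local Open Scope classical_set_scope.

Definition tensor (R : realType) (d n : nat) := {ffun 'I_d -> 'I_n} -> R.

Definition frob (R : realType) (d n : nat) (X : tensor R d n) : R :=
  Num.sqrt (\sum_(idx : {ffun 'I_d -> 'I_n}) X idx ^+ 2).

Definition vnorm2 (R : realType) (n : nat) (u : 'I_n -> R) : R :=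
  Num.sqrt (\sum_(j < n) u j ^+ 2).
Definition vdot (R : realType) (n : nat) (u v : 'I_n -> R) : R :=
  \sum_(j < n) u j * v j.

Definition kset (d r : nat) (k : {ffun 'I_d -> 'I_r}) (i : 'I_d) (q : 'I_r)
  : {ffun 'I_d -> 'I_r} := [ffun j => if j == i then q else k j].

Definition Bset (R : realType) (d n r : nat) (Rb mu theta : R)
  : set (tensor R d n) :=
  [set X : tensor R d n | exists (C : {ffun 'I_d -> 'I_r} -> R) (u : 'I_d -> 'I_r -> 'I_n -> R),
     [/\ (forall idx : {ffun 'I_d -> 'I_n}, X idx =
            \sum_(k : {ffun 'I_d -> 'I_r}) C k * \prod_(i < d) u i (k i) (idx i)),
         (forall i k, vnorm2 (u i k) <= Rb),
         (forall i k k', k != k' -> `|vdot (u i k) (u i k')| <= mu),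
         Num.sqrt (\sum_(k : {ffun 'I_d -> 'I_r}) C k ^+ 2) = 1 /\
         (forall (i : 'I_d) (p q : 'I_r), p != q ->
            \sum_(k : {ffun 'I_d -> 'I_r} | k i == p) C k * C (kset k i q) = 0)
       & frob X >= theta]].

Definition is_cover (R : realType) (d n : nat) (S : set (tensor R d n)) (t : R)
  (m : nat) (N : 'I_m -> tensor R d n) : Prop :=
  (forall j, S (N j)) /\
  (forall X, S X -> exists j, frob (fun idx => X idx - N j idx) <= t).

(* Covering number: minimal cardinality of such a cover (+oo if none). *)
Definition covering_number (R : realType) (d n : nat) (S : set (tensor R d n))
  (t : R) : \bar R :=
  ereal_inf [set (m%:R)%:E | m in [set m | exists N : 'I_m -> tensor R d n,
                                            is_cover S t N]].

(* Main.v *)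
Require Import Defs.
From HB Require Import structures.
From mathcomp Require Import all_boot all_order all_algebra.
From mathcomp Require Import all_classical all_reals all_analysis.
From mathcomp Require Import measurable_realfun.
From mathcomp Require Import ring lra zify.
Set Implicit Arguments. Unset Strict Implicit. Unset Printing Implicit Defensive.
Import Order.TTheory GRing.Theory Num.Theory.
Local Open Scope ring_scope.

Module PartA.
Import numFieldNormedType.Exports.
Local Open Scope ring_scope.
Local Open Scope classical_set_scope.

Section GaussSum.
Variable R : realType.
Let mu := @lebesgue_measure R.

Lemma gauss_decr (x y : R) : 0 <= x -> x <= y -> gauss_fun y <= gauss_fun x.
Proof.
move=> x0 xy; rewrite /gauss_fun ler_expR lerN2.
by rewrite ler_sqr ?nnegrE // (le_trans x0).
Qed.

Lemma mgauss (D : set R) : measurable_fun D (EFin \o (@gauss_fun R)).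
Proof.
apply/measurable_EFinP; apply: measurable_funTS; exact: measurable_gauss_fun.
Qed.

Lemma gauss_sum_int (s : R) (M : nat) : 0 < s ->
  ((\sum_(k < M) s * gauss_fun (s * k.+1%:R))%:E <=
   \int[mu]_(x in `[0%R, (s * M%:R)%R]) (gauss_fun x)%:E)%E.
Proof.
move=> s0; elim: M => [|M IH].
  rewrite big_ord0; apply: integral_ge0 => x _; rewrite lee_fin gauss_fun_ge0 //.
rewrite big_ord_recr /= EFinD.
have sM : s * M%:R <= s * M.+1%:R by rewrite ler_pM2l // ler_nat.
have -> : `[0, s * M.+1%:R] = `[0, s * M%:R] `|` `]s * M%:R, s * M.+1%:R] :> set R.
  apply/seteqP; split => x /=; rewrite !in_itv /=.
    move=> /andP[x0 xM]; case: (leP x (s * M%:R)) => h; [left|right];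
      by rewrite ?x0 ?h ?xM.
  move=> [/andP[x0 xM]|/andP[xM xM1]].
    by rewrite x0 (le_trans xM sM).
  rewrite xM1 andbT; apply: le_trans (ltW xM).
  by rewrite mulr_ge0 // ltW.
rewrite ge0_integral_setU //; last 3 first.
- exact: mgauss.
- by move=> x _; rewrite lee_fin gauss_fun_ge0.
- rewrite disj_set2E; apply/eqP/seteqP; split => // x /= [].
  by rewrite !in_itv /= => /andP[_ h1] /andP[h2 _]; move: (lt_le_trans h2 h1); rewrite ltxx.
apply: leeD; first exact: IH.
apply: (@le_trans _ _ (\int[mu]_(x in `](s * M%:R)%R, (s * M.+1%:R)%R]) (cst (gauss_fun (s * M.+1%:R))%:E) x))%E.
  rewrite integral_cst //= lebesgue_measure_itv /= lte_fin ltr_pM2l // ltr_nat ltnSn.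
  by rewrite -EFinD -EFinM lee_fin -mulrBr -natrB // subSnn mulr1 mulrC.
apply: ge0_le_integral.
- exact: measurable_itv.
- by move=> x _; rewrite /cst lee_fin gauss_fun_ge0.
- exact: measurable_cst.
- exact: mgauss.
move=> x; rewrite /= in_itv /= => /andP[h1 h2]; rewrite /cst lee_fin.
apply: gauss_decr => //; apply: le_trans (ltW h1); by rewrite mulr_ge0 // ltW.
Qed.

Lemma gauss_sum (s : R) (M : nat) : 0 < s ->
  \sum_(k < M) s * gauss_fun (s * k.+1%:R) <= Num.sqrt pi / 2.
Proof.
move=> s0; rewrite -lee_fin -integral0y_gauss.
apply: le_trans (gauss_sum_int M s0) _.
apply: ge0_subset_integral => //.
- exact: mgauss.
- by move=> x _; rewrite lee_fin gauss_fun_ge0.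
- move=> x /=; rewrite !in_itv /= => /andP[-> _]; by [].
Qed.

End GaussSum.

End PartA.
Import PartA.

Module PartB.
Import numFieldNormedType.Exports.
Local Open Scope ring_scope.
Local Open Scope classical_set_scope.

Section PiBound.
Variable R : realType.

Lemma cos_coeff'_val (x : R) n :
  cos_coeff' x n = (-1) ^+ (odd n) * x ^+ n.*2 / (n.*2)`!%:R.
Proof. by rewrite /cos_coeff' -exprnP signr_odd. Qed.

Lemma cos85_lt0 : cos (8/5 : R) < 0.
Proof.
rewrite -(opprK (cos _)) oppr_lt0; have /cvgN h := @cvg_cos_coeff' R (8/5).
rewrite -(cvg_lim (@Rhausdorff R) h).
apply: (@lt_trans _ _ (\sum_(0 <= i < 3) - cos_coeff' (8/5 : R) i)).
  rewrite !big_nat_recl // big_nil !cos_coeff'_val /=.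
  rewrite !expr0 !expr1 /= !mul1r.
  have -> : (2`!)%:R = 2 :> R by [].
  have -> : (4`!)%:R = 24 :> R by rewrite /factorial /= .
  rewrite (_ : (0.*2)`!%:R = 1 :> R) // invr1.
  rewrite (_ : 1.*2 = 2)%N // (_ : 2.*2 = 4)%N //.
  rewrite !exprS expr0 !mulr1. lra.
rewrite -seriesN lt_sum_lim_series //.
  by move/cvgP in h; by rewrite seriesN.
move=> d; rewrite !cos_coeff'_val /= add0n odd_double /= expr1 expr0.
have -> : (3 + d.*2.+1).*2 = ((3 + d.*2).*2).+2 by rewrite addnS doubleS.
set m := (3 + d.*2).*2.
have m6 : (6 <= m)%N by rewrite /m -addnn; lia.
clearbody m.
rewrite (factS m.+1) (factS m) !natrM exprSr exprS mulN1r mulNr opprK mul1r.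
have F0 : 0 < (m`!)%:R :> R by rewrite ltr0n fact_gt0.
have X0 : 0 < (8/5 : R) ^+ m by rewrite exprn_gt0.
have M1 : 56%:R <= m.+2%:R * m.+1%:R :> R.
  by rewrite -natrM ler_nat; nia.
rewrite mulrA.
move: F0 X0 M1; set F := (m`!)%:R; set X := (8/5 : R) ^+ m.
set P := m.+2%:R * m.+1%:R => F0 X0 M1.
have P0 : 0 < P by apply: lt_le_trans M1; rewrite ltr0n.
have -> : 8 / 5 * X * (8 / 5) / (P * F) = (X / F) * ((8/5 * (8/5)) / P).
  by field; apply/andP; split; rewrite gt_eqF.
have q1 : (8/5 * (8/5)) / P < 1.
  rewrite ltr_pdivrMr // mul1r; apply: lt_le_trans M1.
  lra.
rewrite -{1}(mulr1 (X/F)) -mulrBr mulr_gt0 ?divr_gt0 // subr_gt0 //.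
Qed.

Lemma pi_lt165 : pi < 16/5 :> R.
Proof.
have : ~ (8/5 < pi / 2 :> R).
  move=> h; have : 0 < cos (8/5 : R).
    apply: cos_gt0_pihalf; rewrite h andbT; apply: lt_trans (_ : 0 < _) => //.
    by rewrite oppr_lt0 divr_gt0 // pi_gt0.
  by rewrite ltNge (ltW cos85_lt0).
move/negP; rewrite -leNgt le_eqVlt => /orP[/eqP h|h].
  by have := cos85_lt0; rewrite -h cos_pihalf ltxx.
by move: h; rewrite ltr_pdivrMr // => h; apply: (lt_le_trans h); lra.
Qed.


End PiBound.

End PartB.
Import PartB.

Module PartC.
Import numFieldNormedType.Exports.
Local Open Scope ring_scope.
Local Open Scope classical_set_scope.

Section Factor.
Variable R : realType.
Hypothesis gauss_sum : forall (s : R) (M : nat), 0 < s ->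
  \sum_(k < M) s * gauss_fun (s * k.+1%:R) <= Num.sqrt pi / 2.
Hypothesis pi_lt165 : pi < 16/5 :> R.

Lemma expR_ub (y : R) : 0 <= y < 1 -> expR y <= (1 - y)^-1.
Proof.
move=> /andP[y0 y1].
have h : 1 - y <= expR (- y) by have := expR_ge1Dx (- y); rewrite addrC.
have -> : expR y = (expR (- y))^-1 by rewrite expRN invrK.
by rewrite lef_pV2 ?posrE ?expR_gt0 ?subr_gt0.
Qed.

Definition cc : R := 5/8.

Lemma expR_cc : expR (cc ^+ 2) <= 151/100.
Proof.
have -> : cc ^+ 2 = 4%:R * (25/256) by rewrite /cc; field.
rewrite expRM_natl.
have h : expR (25/256 : R) <= (1 - 25/256)^-1 by apply: expR_ub; lra.
apply: (le_trans (lerXn2r 4 _ _ h)); rewrite ?nnegrE ?expR_ge0 ?invr_ge0 //; try lra.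
have -> : (1 - 25/256 : R)^-1 = 256/231 by field.
rewrite -[X in _ <= X]/((151/100 : R)); lra.
Qed.

Lemma sqrtpi_le : Num.sqrt pi <= 9/5 :> R.
Proof.
rewrite -(@ger0_norm _ (9/5 : R)); last lra.
rewrite -sqrtr_sqr ler_sqrt; last lra.
rewrite expr2; apply: ltW; apply: (lt_trans pi_lt165); lra.
Qed.

Lemma coord_factor (K : R) (M : nat) : 2 <= K ->
  expR (cc ^+ 2) * \sum_(y : bool * 'I_M.+1) gauss_fun (cc * (y.2)%:R / K)
  <= 6 * K.
Proof.
move=> K2; have K0 : 0 < K by apply: lt_le_trans K2; lra.
set s := cc / K.
have s0 : 0 < s by rewrite /s divr_gt0 // /cc; lra.
have E : \sum_(y : bool * 'I_M.+1) gauss_fun (cc * (y.2)%:R / K) =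
    2 * (1 + \sum_(k < M) gauss_fun (s * k.+1%:R)).
  rewrite -(pair_bigA _ (fun (b : bool) (k : 'I_M.+1) => gauss_fun (cc * k%:R / K))) /=.
  have Hs : \sum_(j < M.+1) gauss_fun (cc * j%:R / K) = 1 + \sum_(k < M) gauss_fun (s * k.+1%:R).
    rewrite big_ord_recl /= mulr0 mul0r /gauss_fun expr0n /= oppr0 expR0; congr (_ + _).
    by apply: eq_bigr => k _; rewrite /s /bump /= add1n mulrAC.
  by rewrite big_bool /= Hs; ring.
have G := gauss_sum M s0.
have G' : \sum_(k < M) gauss_fun (s * k.+1%:R) <= Num.sqrt pi / 2 / s.
  by rewrite ler_pdivlMr // mulrC big_distrr.
have SP := sqrtpi_le; have EC := expR_cc.
have Sge : 0 <= \sum_(k < M) gauss_fun (s * k.+1%:R).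
  by apply: sumr_ge0 => k _; exact: gauss_fun_ge0.
rewrite E.
have eqs : Num.sqrt pi / 2 / s = Num.sqrt pi * K * (4/5) by rewrite /s /cc; field; rewrite gt_eqF.
rewrite eqs in G'.
move: G'; set S := \sum_(k < M) _ => G'.
have Sb : S <= 9/5 * K * (4/5).
  apply: (le_trans G'); rewrite ler_pM2r; last lra.
  by rewrite ler_pM2r.
have ecp : 0 <= expR (cc ^+ 2) by exact: expR_ge0.
nra.
Qed.
End Factor.

End PartC.
Import PartC.


Section Tensor.
Variable R : realType.
Variables d n r : nat.


Definition Phi (A : {ffun 'I_d -> 'I_r} -> R) (v : 'I_d -> 'I_r -> 'I_n -> R)
  (idx : {ffun 'I_d -> 'I_n}) : R :=
  \sum_(k : {ffun 'I_d -> 'I_r}) A k * \prod_(i < d) v i (k i) (idx i).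

Lemma gram_expand A v :
  \sum_(idx : {ffun 'I_d -> 'I_n}) (Phi A v idx) ^+ 2 =
  \sum_(k : {ffun 'I_d -> 'I_r}) \sum_(k' : {ffun 'I_d -> 'I_r})
     A k * A k' * \prod_(i < d) vdot (v i (k i)) (v i (k' i)).
Proof.
transitivity (\sum_(idx : {ffun 'I_d -> 'I_n}) \sum_(k : {ffun 'I_d -> 'I_r})
   \sum_(k' : {ffun 'I_d -> 'I_r}) (A k * A k' *
      \prod_(i < d) (v i (k i) (idx i) * v i (k' i) (idx i)))).
  apply: eq_bigr => idx _; rewrite /Phi expr2 mulr_suml; apply: eq_bigr => k _.
  rewrite mulr_sumr; apply: eq_bigr => k' _; rewrite big_split /=; ring.
rewrite exchange_big /=; apply: eq_bigr => k _.
rewrite exchange_big /=; apply: eq_bigr => k' _.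
rewrite -mulr_sumr; congr (_ * _).
rewrite /vdot.
rewrite (bigA_distr_bigA (fun (i : 'I_d) (j : 'I_n) => v i (k i) j * v i (k' i) j)).
by [].
Qed.

Lemma amgm (x y : R) : `|x| * `|y| <= (x ^+ 2 + y ^+ 2) / 2.
Proof.
rewrite ler_pdivlMr ?ltr0n //.
have h := sqr_ge0 (`|x| - `|y|).
rewrite -[x ^+ 2]real_normK ?num_real // -[y ^+ 2]real_normK ?num_real //.
nra.
Qed.

Lemma schur (a : {ffun 'I_d -> 'I_r} -> R) (G g : 'I_d -> 'I_r -> 'I_r -> R)
  (s : 'I_d -> R) :
  (forall i p q, `|G i p q| <= g i p q) ->
  (forall i p, \sum_q g i p q <= s i) ->
  (forall i q, \sum_p g i p q <= s i) ->
  \sum_(k : {ffun 'I_d -> 'I_r}) \sum_(k' : {ffun 'I_d -> 'I_r})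
     a k * a k' * \prod_(i < d) G i (k i) (k' i)
  <= (\prod_(i < d) s i) * \sum_(k : {ffun 'I_d -> 'I_r}) a k ^+ 2.
Proof.
move=> Gg rows cols.
have g0 : forall i p q, 0 <= g i p q by move=> i p q; exact: le_trans (Gg i p q).
have Pg0 : forall (k k' : {ffun 'I_d -> 'I_r}), 0 <= \prod_(i < d) g i (k i) (k' i).
  by move=> k k'; apply: prodr_ge0 => i _; exact: g0.
have rowP : forall k : {ffun 'I_d -> 'I_r},
    \sum_(k' : {ffun 'I_d -> 'I_r}) \prod_(i < d) g i (k i) (k' i) <= \prod_(i < d) s i.
  move=> k; rewrite -(bigA_distr_bigA (fun (i : 'I_d) (q : 'I_r) => g i (k i) q)).
  apply: ler_prod => i _; apply/andP; split; last exact: rows.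
  by apply: sumr_ge0 => q _; exact: g0.
have colP : forall k' : {ffun 'I_d -> 'I_r},
    \sum_(k : {ffun 'I_d -> 'I_r}) \prod_(i < d) g i (k i) (k' i) <= \prod_(i < d) s i.
  move=> k'; rewrite -(bigA_distr_bigA (fun (i : 'I_d) (p : 'I_r) => g i p (k' i))).
  apply: ler_prod => i _; apply/andP; split; last exact: cols.
  by apply: sumr_ge0 => q _; exact: g0.
apply: (@le_trans _ _ (\sum_(k : {ffun 'I_d -> 'I_r}) \sum_(k' : {ffun 'I_d -> 'I_r})
   ((a k ^+ 2 + a k' ^+ 2) / 2) * \prod_(i < d) g i (k i) (k' i))).
  apply: ler_sum => k _; apply: ler_sum => k' _.
  apply: (le_trans (ler_norm _)); rewrite !normrM normr_prod.
  apply: ler_pM.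
  - by rewrite mulr_ge0.
  - by apply: prodr_ge0 => i _.
  - exact: amgm.
  - by apply: ler_prod => i _; rewrite normr_ge0 Gg.
have -> : \sum_(k : {ffun 'I_d -> 'I_r}) \sum_(k' : {ffun 'I_d -> 'I_r})
   ((a k ^+ 2 + a k' ^+ 2) / 2) * \prod_(i < d) g i (k i) (k' i) =
   (\sum_(k : {ffun 'I_d -> 'I_r}) a k ^+ 2 * \sum_(k' : {ffun 'I_d -> 'I_r}) \prod_(i < d) g i (k i) (k' i)) / 2 +
   (\sum_(k' : {ffun 'I_d -> 'I_r}) a k' ^+ 2 * \sum_(k : {ffun 'I_d -> 'I_r}) \prod_(i < d) g i (k i) (k' i)) / 2.
  transitivity (\sum_(k : {ffun 'I_d -> 'I_r}) \sum_(k' : {ffun 'I_d -> 'I_r})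
     (a k ^+ 2 / 2 * \prod_(i < d) g i (k i) (k' i)) +
     \sum_(k : {ffun 'I_d -> 'I_r}) \sum_(k' : {ffun 'I_d -> 'I_r})
     (a k' ^+ 2 / 2 * \prod_(i < d) g i (k i) (k' i))).
    rewrite -big_split /=; apply: eq_bigr => k _; rewrite -big_split /=.
    by apply: eq_bigr => k' _; ring.
  congr (_ + _).
    rewrite mulr_suml; apply: eq_bigr => k _.
    by rewrite [RHS]mulrAC [RHS]mulr_sumr.
  rewrite exchange_big /= mulr_suml; apply: eq_bigr => k' _.
  by rewrite [RHS]mulrAC [RHS]mulr_sumr.
set S := \sum_(k : {ffun 'I_d -> 'I_r}) a k ^+ 2.
have h1 : \sum_(k : {ffun 'I_d -> 'I_r}) a k ^+ 2 *
    \sum_(k' : {ffun 'I_d -> 'I_r}) \prod_(i < d) g i (k i) (k' i) <= (\prod_(i < d) s i) * S.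
  rewrite /S mulr_sumr; apply: ler_sum => k _; rewrite mulrC.
  by apply: ler_wpM2r; [exact: sqr_ge0 | exact: rowP].
have h2 : \sum_(k' : {ffun 'I_d -> 'I_r}) a k' ^+ 2 *
    \sum_(k : {ffun 'I_d -> 'I_r}) \prod_(i < d) g i (k i) (k' i) <= (\prod_(i < d) s i) * S.
  rewrite /S mulr_sumr; apply: ler_sum => k _; rewrite mulrC.
  by apply: ler_wpM2r; [exact: sqr_ge0 | exact: colP].
lra.
Qed.

Variables (Rb mu : R).
Hypothesis mu0 : 0 <= mu.

Lemma L2_ge0 : 0 <= Rb ^+ 2 + (r.-1)%:R * mu.
Proof. by rewrite addr_ge0 ?sqr_ge0 // mulr_ge0. Qed.

Definition gram_ok (w : 'I_r -> 'I_n -> R) :=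
  (forall p, vdot (w p) (w p) <= Rb ^+ 2) /\
  (forall p q, p != q -> `|vdot (w p) (w q)| <= mu).

Definition gmat (p q : 'I_r) : R := if p == q then Rb ^+ 2 else mu.

Definition L2 : R := Rb ^+ 2 + (r.-1)%:R * mu.

Lemma vdot_ge0 (w : 'I_n -> R) : 0 <= vdot w w.
Proof. by apply: sumr_ge0 => j _; rewrite -expr2 sqr_ge0. Qed.

Lemma rowsum_gmat p : \sum_q gmat p q = L2.
Proof.
rewrite (bigD1 p) //= /gmat eqxx; congr (_ + _).
rewrite (eq_bigr (fun _ => mu)); last by move=> q /negPf; rewrite eq_sym => ->.
by rewrite sumr_const cardC1 card_ord mulr_natl.
Qed.

Lemma colsum_gmat q : \sum_p gmat p q = L2.
Proof.
rewrite -(rowsum_gmat q); apply: eq_bigr => p _; rewrite /gmat eq_sym.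
by case: eqP => // ->.
Qed.

Lemma gram_bound (w : 'I_r -> 'I_n -> R) : gram_ok w ->
  forall p q, `|vdot (w p) (w q)| <= gmat p q.
Proof.
move=> [h1 h2] p q; rewrite /gmat; case: eqP => [->|/eqP pq].
  by rewrite ger0_norm ?vdot_ge0.
exact: h2.
Qed.

Lemma N1 (A : {ffun 'I_d -> 'I_r} -> R) (v : 'I_d -> 'I_r -> 'I_n -> R) :
  (forall i, gram_ok (v i)) ->
  \sum_(idx : {ffun 'I_d -> 'I_n}) (Phi A v idx) ^+ 2 <=
  L2 ^+ d * \sum_(k : {ffun 'I_d -> 'I_r}) A k ^+ 2.
Proof.
move=> hv; rewrite gram_expand.
have := @schur A (fun i p q => vdot (v i p) (v i q)) (fun _ => gmat) (fun _ => L2).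
rewrite prodr_const card_ord; apply.
- by move=> i p q; apply: gram_bound.
- by move=> i p; rewrite rowsum_gmat.
- by move=> i q; rewrite colsum_gmat.
Qed.

Section KS.
Implicit Types (k : {ffun 'I_d -> 'I_r}) (i j : 'I_d) (p q : 'I_r).
Lemma kset_at k i q : kset k i q i = q.
Proof. by rewrite /kset ffunE eqxx. Qed.

Lemma kset_ne k i q j : j != i -> kset k i q j = k j.
Proof. by rewrite /kset ffunE => /negPf ->. Qed.

Lemma kset_kset k i p q : kset (kset k i p) i q = kset k i q.
Proof. by apply/ffunP => j; rewrite /kset !ffunE; case: eqP. Qed.

Lemma kset_id k i : kset k i (k i) = k.
Proof. by apply/ffunP => j; rewrite /kset !ffunE; case: eqP => // ->. Qed.

Lemma kset_eq k i q : (kset k i q == k) = (k i == q).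
Proof.
apply/eqP/eqP => [<-|<-]; first by rewrite kset_at.
exact: kset_id.
Qed.

Lemma reindex_kset (F : {ffun 'I_d -> 'I_r} -> R) i p q :
  \sum_(k : {ffun 'I_d -> 'I_r} | k i == q) F (kset k i p) = \sum_(k : {ffun 'I_d -> 'I_r} | k i == p) F k.
Proof.
rewrite [RHS](reindex_onto (fun k : {ffun 'I_d -> 'I_r} => kset k i p) (fun k : {ffun 'I_d -> 'I_r} => kset k i q)) /=.
  apply: eq_bigl => k; rewrite kset_at eqxx /= kset_kset kset_eq //.
by move=> k /eqP kp; rewrite kset_kset -kp kset_id.
Qed.

Lemma partition_t (F : {ffun 'I_d -> 'I_r} -> R) i :
  \sum_(p : 'I_r) \sum_(k : {ffun 'I_d -> 'I_r} | k i == p) F k = \sum_(k : {ffun 'I_d -> 'I_r}) F k.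
Proof.
rewrite (exchange_big_dep xpredT) //=; apply: eq_bigr => k _.
by rewrite (big_pred1 (k i)) // => p; rewrite /= eq_sym.
Qed.

End KS.

Section Mode.
Variables (t : 'I_d) (r0 : 'I_r).
Implicit Types (C : {ffun 'I_d -> 'I_r} -> R) (v : 'I_d -> 'I_r -> 'I_n -> R).

Definition bcore C v (j : 'I_n) (k : {ffun 'I_d -> 'I_r}) : R :=
  (k t == r0)%:R * \sum_(p : 'I_r) C (kset k t p) * v t p j.

Definition vmod v (j : 'I_n) (i : 'I_d) : 'I_r -> 'I_n -> R :=
  if i == t then (fun p j' => (p == r0)%:R * (j' == j)%:R) else v i.

Lemma phi_split C v j idx :
  Phi (bcore C v j) (vmod v j) idx = (idx t == j)%:R * Phi C v idx.
Proof.
rewrite /Phi.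
have prodE : forall k : {ffun 'I_d -> 'I_r},
    \prod_(i < d) vmod v j i (k i) (idx i) =
    (k t == r0)%:R * (idx t == j)%:R * \prod_(i < d | i != t) v i (k i) (idx i).
  move=> k; rewrite (bigD1 t) //= /vmod eqxx; congr (_ * _).
  by apply: eq_bigr => i /negPf ->.
under eq_bigr do rewrite prodE.
have [ej|nej] := eqVneq (idx t) j; last first.
  by rewrite mul0r big1 // => k _; rewrite mulr0 mul0r mulr0.
rewrite mul1r.
transitivity (\sum_(k : {ffun 'I_d -> 'I_r} | k t == r0)
   \sum_(p : 'I_r) C (kset k t p) * v t p j * \prod_(i < d | i != t) v i (kset k t p i) (idx i)).
  rewrite [RHS]big_mkcond /=; apply: eq_bigr => k _.
  rewrite /bcore; case: eqP => _; last by rewrite !mul0r.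
  rewrite !mul1r mulr_suml; apply: eq_bigr => p _; congr (_ * _).
  by apply: eq_bigr => i it; rewrite kset_ne.
rewrite exchange_big /=.
under eq_bigr => p _ do rewrite (reindex_kset (fun k => C k * v t p j *
   \prod_(i < d | i != t) v i (k i) (idx i)) t p r0).
rewrite -(partition_t (fun k => C k * \prod_(i < d) v i (k i) (idx i)) t).
apply: eq_bigr => p _; apply: eq_bigr => k /eqP kt.
by rewrite [in RHS](bigD1 t) //= kt ej mulrA.
Qed.

Lemma sum_split_sq C v :
  \sum_(idx : {ffun 'I_d -> 'I_n}) (Phi C v idx) ^+ 2 =
  \sum_(j : 'I_n) \sum_(idx : {ffun 'I_d -> 'I_n}) (Phi (bcore C v j) (vmod v j) idx) ^+ 2.
Proof.
rewrite exchange_big /=; apply: eq_bigr => idx _.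
under eq_bigr do rewrite phi_split.
rewrite (bigD1 (idx t)) //= eqxx mul1r big1 ?addr0 // => j /negPf.
by rewrite eq_sym => ->; rewrite mul0r expr0n.
Qed.

Lemma vdot_vmod v j p q :
  vdot (vmod v j t p) (vmod v j t q) = (p == r0)%:R * (q == r0)%:R.
Proof.
rewrite /vdot /vmod eqxx (bigD1 j) //= eqxx big1 ?addr0.
  by rewrite !mulr1.
by move=> j' /negPf ->; rewrite !mulr0.
Qed.

Lemma per_j C v j :
  (forall i, i != t -> gram_ok (v i)) ->
  \sum_(idx : {ffun 'I_d -> 'I_n}) (Phi (bcore C v j) (vmod v j) idx) ^+ 2 <=
  L2 ^+ d.-1 * \sum_(k : {ffun 'I_d -> 'I_r}) (bcore C v j k) ^+ 2.
Proof.
move=> hv; rewrite gram_expand.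
have := @schur (bcore C v j) (fun i p q => vdot (vmod v j i p) (vmod v j i q))
  (fun i => if i == t then (fun p q => (p == q)%:R) else gmat)
  (fun i => if i == t then 1 else L2).
have -> : \prod_(i < d) (if i == t then 1 else L2) = L2 ^+ d.-1.
  rewrite (bigD1 t) //= eqxx mul1r (eq_bigr (fun _ => L2)).
    by rewrite prodr_const cardC1 card_ord.
  by move=> i /negPf ->.
apply.
- move=> i p q /=; case: (eqVneq i t) => [->|it].
    rewrite vdot_vmod.
    case: (eqVneq p q) => [->|pq]; first by rewrite -natrM ger0_norm // ler_nat; case: (q == r0).
    case: (eqVneq p r0) => [pr|]; last by rewrite mul0r normr0.
    by rewrite -pr eq_sym (negPf pq) mulr0 normr0.
  rewrite /vmod (negPf it); apply: gram_bound; exact: hv.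
- move=> i p /=; case: (eqVneq i t) => [_|_] /=.
    rewrite (bigD1 p) //= eqxx big1 ?addr0 // => q /negPf.
    by rewrite eq_sym => ->.
  by rewrite rowsum_gmat.
- move=> i q /=; case: (eqVneq i t) => [_|_] /=.
    by rewrite (bigD1 q) //= eqxx big1 ?addr0 // => p /negPf ->.
  by rewrite colsum_gmat.
Qed.

Lemma sq_sum_expand (c : 'I_r -> R) (w : 'I_r -> 'I_n -> R) :
  \sum_(j : 'I_n) (\sum_(p : 'I_r) c p * w p j) ^+ 2 =
  \sum_(p : 'I_r) \sum_(q : 'I_r) c p * c q * vdot (w p) (w q).
Proof.
transitivity (\sum_(j : 'I_n) \sum_(p : 'I_r) \sum_(q : 'I_r) c p * c q * (w p j * w q j)).
  apply: eq_bigr => j _; rewrite expr2 mulr_suml; apply: eq_bigr => p _.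
  rewrite mulr_sumr; apply: eq_bigr => q _; ring.
rewrite exchange_big /=; apply: eq_bigr => p _.
rewrite exchange_big /=; apply: eq_bigr => q _.
by rewrite /vdot mulr_sumr.
Qed.

Lemma core_bound C v (del2 : R) :
  (forall p q, p != q ->
     \sum_(k : {ffun 'I_d -> 'I_r} | k t == p) C k * C (kset k t q) = 0) ->
  (forall p, vdot (v t p) (v t p) <= del2) ->
  \sum_(j : 'I_n) \sum_(k : {ffun 'I_d -> 'I_r}) (bcore C v j k) ^+ 2 <=
  del2 * \sum_(k : {ffun 'I_d -> 'I_r}) C k ^+ 2.
Proof.
move=> orth hd.
have -> : \sum_(j : 'I_n) \sum_(k : {ffun 'I_d -> 'I_r}) (bcore C v j k) ^+ 2 =
  \sum_(p : 'I_r) \sum_(q : 'I_r) vdot (v t p) (v t q) *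
   \sum_(k : {ffun 'I_d -> 'I_r} | k t == r0) C (kset k t p) * C (kset k t q).
  rewrite exchange_big /=.
  transitivity (\sum_(k : {ffun 'I_d -> 'I_r} | k t == r0) \sum_(p : 'I_r) \sum_(q : 'I_r)
     C (kset k t p) * C (kset k t q) * vdot (v t p) (v t q)).
    rewrite [RHS]big_mkcond /=; apply: eq_bigr => k _.
    rewrite /bcore; case: eqP => _; last by rewrite big1 // => j _; rewrite mul0r expr0n.
    under eq_bigr do rewrite mul1r.
    by rewrite sq_sum_expand.
  rewrite exchange_big /=; apply: eq_bigr => p _.
  rewrite exchange_big /=; apply: eq_bigr => q _.
  by rewrite mulr_sumr; apply: eq_bigr => k _; rewrite mulrC.
have O : forall p q, \sum_(k : {ffun 'I_d -> 'I_r} | k t == r0) C (kset k t p) * C (kset k t q)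
    = \sum_(k : {ffun 'I_d -> 'I_r} | k t == p) C k * C (kset k t q).
  move=> p q; rewrite -(reindex_kset (fun k => C k * C (kset k t q)) t p r0).
  by apply: eq_bigr => k _; rewrite kset_kset.
have D : forall p, \sum_(q : 'I_r) vdot (v t p) (v t q) *
    \sum_(k : {ffun 'I_d -> 'I_r} | k t == r0) C (kset k t p) * C (kset k t q)
    = vdot (v t p) (v t p) * \sum_(k : {ffun 'I_d -> 'I_r} | k t == p) C k ^+ 2.
  move=> p; rewrite (bigD1 p) //= [X in _ + X]big1 ?addr0.
    rewrite O; congr (_ * _); apply: eq_bigr => k /eqP kp.
    by rewrite -kp kset_id expr2.
  by move=> q qp; rewrite O orth ?mulr0 // eq_sym.
under eq_bigr do rewrite D.
rewrite -(partition_t (fun k => C k ^+ 2) t) mulr_sumr.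
apply: ler_sum => p _; apply: ler_wpM2r; last exact: hd.
by apply: sumr_ge0 => k _; exact: sqr_ge0.
Qed.

Lemma N2 C v (del2 : R) :
  (forall p q, p != q ->
     \sum_(k : {ffun 'I_d -> 'I_r} | k t == p) C k * C (kset k t q) = 0) ->
  (forall p, vdot (v t p) (v t p) <= del2) ->
  (forall i, i != t -> gram_ok (v i)) ->
  \sum_(idx : {ffun 'I_d -> 'I_n}) (Phi C v idx) ^+ 2 <=
  L2 ^+ d.-1 * (del2 * \sum_(k : {ffun 'I_d -> 'I_r}) C k ^+ 2).
Proof.
move=> orth hd hv; rewrite sum_split_sq.
apply: (@le_trans _ _ (\sum_(j : 'I_n) L2 ^+ d.-1 *
   \sum_(k : {ffun 'I_d -> 'I_r}) (bcore C v j k) ^+ 2)).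
  by apply: ler_sum => j _; exact: per_j.
rewrite -mulr_sumr; apply: ler_wpM2l.
  by rewrite exprn_ge0 // /L2 L2_ge0.
exact: core_bound.
Qed.
End Mode.

Definition mixv (u u' : 'I_d -> 'I_r -> 'I_n -> R) (t : nat) : 'I_d -> 'I_r -> 'I_n -> R :=
  fun i => if (i < t)%N then u' i else u i.

Definition wv (u u' : 'I_d -> 'I_r -> 'I_n -> R) (t : 'I_d) : 'I_d -> 'I_r -> 'I_n -> R :=
  fun i => if (i < t)%N then u' i else
           if i == t then (fun p j => u t p j - u' t p j) else u i.

Lemma phi_diffC (A A' : {ffun 'I_d -> 'I_r} -> R) v idx :
  Phi A v idx - Phi A' v idx = Phi (fun k => A k - A' k) v idx.
Proof. by rewrite /Phi -sumrB; apply: eq_bigr => k _; rewrite mulrBl. Qed.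

Lemma phi_step C u u' (t : 'I_d) idx :
  Phi C (mixv u u' t) idx - Phi C (mixv u u' t.+1) idx = Phi C (wv u u' t) idx.
Proof.
rewrite /Phi -sumrB; apply: eq_bigr => k _; rewrite -mulrBr; congr (_ * _).
rewrite (bigD1 t) //= [X in _ - X](bigD1 t) //= [RHS](bigD1 t) //=.
rewrite /mixv /wv ltnn ltnSn eqxx.
have -> : \prod_(i < d | i != t) (if (i < t)%N then u' i else u i) (k i) (idx i) =
          \prod_(i < d | i != t) (if (i < t.+1)%N then u' i else u i) (k i) (idx i).
  apply: eq_bigr => i it; rewrite [in RHS]ltnS [in RHS]leq_eqVlt.
  by have -> : (nat_of_ord i == nat_of_ord t) = false by apply/negbTE; exact: it.
have -> : \prod_(i < d | i != t) (if (i < t)%N then u' i else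
           if i == t then (fun p j => u t p j - u' t p j) else u i) (k i) (idx i) =
          \prod_(i < d | i != t) (if (i < t.+1)%N then u' i else u i) (k i) (idx i).
  apply: eq_bigr => i it; rewrite [in RHS]ltnS [in RHS]leq_eqVlt (negPf it).
  by have -> : (nat_of_ord i == nat_of_ord t) = false by apply/negbTE; exact: it.
by rewrite -mulrBl.
Qed.

Lemma phi_ext C v v' idx : (forall i, v i = v' i) -> Phi C v idx = Phi C v' idx.
Proof. by move=> h; apply: eq_bigr => k _; congr (_ * _); apply: eq_bigr => i _; rewrite h. Qed.

Lemma phi_telescope C C' u u' idx :
  Phi C u idx - Phi C' u' idx =
  Phi (fun k => C k - C' k) u idx + \sum_(t < d) Phi C' (wv u u' t) idx.
Proof.
have -> : Phi C u idx - Phi C' u' idx =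
   (Phi C u idx - Phi C' u idx) + (Phi C' u idx - Phi C' u' idx) by ring.
rewrite phi_diffC; congr (_ + _).
under eq_bigr => t _ do rewrite -phi_step.
have E := @telescope_sumr _ 0 d (fun t => - Phi C' (mixv u u' t) idx) (leq0n d).
rewrite big_mkord in E.
have -> : \sum_(i < d) (Phi C' (mixv u u' i) idx - Phi C' (mixv u u' i.+1) idx) =
          \sum_(i < d) (- Phi C' (mixv u u' i.+1) idx - - Phi C' (mixv u u' i) idx).
  by apply: eq_bigr => i _; ring.
rewrite E.
rewrite (@phi_ext C' (mixv u u' 0) u); last by [].
rewrite (@phi_ext C' (mixv u u' d) u'); last by move=> i; rewrite /mixv ltn_ord.
ring.
Qed.
End Tensor.



Section Norms.
Variable R : rcfType.
Variable T : finType.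

Definition nrm (f : T -> R) : R := Num.sqrt (\sum_x f x ^+ 2).

Lemma nrm_ge0 f : 0 <= nrm f.
Proof. exact: sqrtr_ge0. Qed.

Lemma sumsq_ge0 (f : T -> R) : 0 <= \sum_x f x ^+ 2.
Proof. by apply: sumr_ge0 => x _; exact: sqr_ge0. Qed.

Lemma nrm_sq f : nrm f ^+ 2 = \sum_x f x ^+ 2.
Proof. by rewrite /nrm sqr_sqrtr // sumsq_ge0. Qed.

Lemma sumsq_eq0 (f : T -> R) : \sum_x f x ^+ 2 = 0 -> forall x, f x = 0.
Proof.
move=> h x; have /eqP := h; rewrite psumr_eq0 => [/allP /(_ x (mem_index_enum x))|].
  by rewrite implyTb sqrf_eq0 => /eqP.
by move=> y _; exact: sqr_ge0.
Qed.

Lemma cauchy_schwarz (f g : T -> R) : \sum_x f x * g x <= nrm f * nrm g.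
Proof.
set a := nrm f; set b := nrm g; set P := \sum_x f x * g x.
have a0 : 0 <= a := nrm_ge0 f; have b0 : 0 <= b := nrm_ge0 g.
have Ha : a ^+ 2 = \sum_x f x ^+ 2 := nrm_sq f.
have Hb : b ^+ 2 = \sum_x g x ^+ 2 := nrm_sq g.
have key : 0 <= \sum_x (b * f x - a * g x) ^+ 2 := sumsq_ge0 _.
have E : \sum_x (b * f x - a * g x) ^+ 2 =
    b ^+ 2 * (\sum_x f x ^+ 2) - 2 * a * b * P + a ^+ 2 * (\sum_x g x ^+ 2).
  rewrite /P !mulr_sumr -sumrB -big_split /=.
  by apply: eq_bigr => x _; ring.
rewrite E -Ha -Hb in key.
case: (ltP 0 (a * b)) => ab.
  have : 0 <= (a * b) * (a * b - P) by nra.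
  by rewrite pmulr_rge0 // subr_ge0.
have ab0 : a * b = 0 by apply/eqP; rewrite eq_le ab mulr_ge0.
have : (a = 0) \/ (b = 0) by move/eqP: ab0; rewrite mulf_eq0 => /orP[/eqP|/eqP]; auto.
case=> z.
  have A0 : \sum_x f x ^+ 2 = 0 by rewrite -Ha z expr0n.
  have f0 := sumsq_eq0 A0.
  by rewrite ab0 /P big1 // => x _; rewrite f0 mul0r.
have B0 : \sum_x g x ^+ 2 = 0 by rewrite -Hb z expr0n.
have g0 := sumsq_eq0 B0.
by rewrite ab0 /P big1 // => x _; rewrite g0 mulr0.
Qed.

Lemma nrm_add (f g : T -> R) : nrm (fun x => f x + g x) <= nrm f + nrm g.
Proof.
rewrite -(@ler_pXn2r _ 2) ?nnegrE ?addr_ge0 ?nrm_ge0 //.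
rewrite nrm_sq sqrrD !nrm_sq.
have cs := cauchy_schwarz f g.
have -> : \sum_x (f x + g x) ^+ 2 = \sum_x f x ^+ 2 + (\sum_x f x * g x) *+ 2 + \sum_x g x ^+ 2.
  rewrite -mulr_natr mulr_suml -!big_split /=; apply: eq_bigr => x _; ring.
lra.
Qed.

Lemma nrm_ext (f g : T -> R) : (forall x, f x = g x) -> nrm f = nrm g.
Proof. by move=> h; rewrite /nrm; congr Num.sqrt; apply: eq_bigr => x _; rewrite h. Qed.

Lemma nrm_big (I : Type) (s : seq I) (F : I -> T -> R) :
  nrm (fun x => \sum_(i <- s) F i x) <= \sum_(i <- s) nrm (F i).
Proof.
elim: s => [|i s IH].
  rewrite big_nil (nrm_ext (g := fun _ => 0)); last by move=> x; rewrite big_nil.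
  by rewrite /nrm big1 ?sqrtr0 // => x _; rewrite expr0n.
rewrite big_cons (nrm_ext (g := fun x => F i x + \sum_(j <- s) F j x)); last first.
  by move=> x; rewrite big_cons.
apply: (le_trans (nrm_add _ _)); exact: lerD.
Qed.

Lemma nrm_le (f : T -> R) (c : R) : 0 <= c -> \sum_x f x ^+ 2 <= c -> nrm f <= Num.sqrt c.
Proof. by move=> c0 h; rewrite /nrm ler_sqrt. Qed.
End Norms.



Section Alg.
Variable R : realFieldType.

Lemma conv_ineq (t b : R) m : 0 <= t <= 1 -> 0 <= b ->
  (1 + t * b) ^+ m <= 1 + t * ((1 + b) ^+ m - 1).
Proof.
move=> /andP[t0 t1] b0; elim: m => [|m IH].
  by rewrite !expr0 subrr mulr0 addr0.
have h1 : 1 <= (1 + b) ^+ m by rewrite exprn_ege1 // lerDl.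
have h2 : 0 <= 1 + t * b by rewrite addr_ge0 // mulr_ge0.
have h3 := ler_wpM2r h2 IH.
rewrite !exprSr.
set X := (1 + b) ^+ m in h1 h3 *.
set Y := (1 + t * b) ^+ m in h3 *.
have hX : 0 <= b * (X - 1) by rewrite mulr_ge0 // subr_ge0.
have tt : t * t <= t by have := ler_wpM2r t0 t1; rewrite mul1r.
have h4 : t * t * (b * (X - 1)) <= t * (b * (X - 1)) by apply: ler_wpM2r.
nra.
Qed.

Lemma key_ineq (a mu : R) (r m : nat) : 1 <= a -> 0 <= mu <= 1 -> (1 <= r)%N ->
  (a + (r.-1)%:R * mu) ^+ m * a <= (a + mu * (r ^ m.+1)%:R) * a ^+ m.
Proof.
move=> a1 /andP[mu0 mu1] r1.
have a0 : 0 < a by apply: lt_le_trans a1; rewrite ltr01.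
set b := (r.-1)%:R * mu.
have b0 : 0 <= b by rewrite mulr_ge0.
have h1 : (1 + mu * (r.-1)%:R) ^+ m <= 1 + mu * ((1 + (r.-1)%:R) ^+ m - 1).
  by apply: conv_ineq; rewrite ?mu0 ?mu1.
have rr : 1 + (r.-1)%:R = r%:R :> R by rewrite -[in RHS](prednK r1) mulrS.
rewrite rr -natrX in h1.
have ia : 0 <= a^-1 <= 1.
  by rewrite invr_ge0 ltW //= invr_le1 // ?unitfE ?gt_eqF.
have h2 := conv_ineq m ia b0.
have e1 : a + b = a * (1 + a^-1 * b) by field; rewrite gt_eqF.
rewrite e1 exprMn.
have bm : b = mu * (r.-1)%:R by rewrite /b mulrC.
rewrite -bm in h1.
have rm : (r ^ m)%:R <= (r ^ m.+1)%:R :> R by rewrite ler_nat expnS leq_pmull.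
have am : 0 < a ^+ m by rewrite exprn_gt0.
set Y := (1 + a^-1 * b) ^+ m in h2 *.
set Z := (1 + b) ^+ m in h1 h2.
set W := (r ^ m)%:R in h1 rm; set V := (r ^ m.+1)%:R in rm *.
have hY : Y <= 1 + a^-1 * (mu * V).
  apply: (le_trans h2); rewrite lerD2l; apply: ler_wpM2l; first by rewrite invr_ge0 ltW.
  have : mu * (W - 1) <= mu * V by apply: ler_wpM2l => //; lra.
  lra.
apply: le_trans (ler_wpM2r (ltW a0) (ler_wpM2l (ltW am) hY)) _.
by rewrite le_eqVlt; apply/orP; left; apply/eqP; field; rewrite gt_eqF.
Qed.
End Alg.



Section Main.
Variables (R : realType) (d n r : nat) (theta eps mu Rb : R).
Hypotheses (hd : (1 <= d)%N) (hn : (1 <= n)%N) (hr : (1 <= r)%N) (ht : 0 <= theta)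
  (he : 0 < eps < 1) (hm : 0 < mu < 1) (hR : 1 <= Rb).

Let e0 : 0 < eps. Proof. by case/andP: he. Qed.
Let e1 : eps < 1. Proof. by case/andP: he. Qed.
Let m0 : 0 < mu. Proof. by case/andP: hm. Qed.
Let m1 : mu < 1. Proof. by case/andP: hm. Qed.
Let R0 : 0 < Rb. Proof. by apply: lt_le_trans hR; rewrite ltr01. Qed.

Definition Par := (({ffun 'I_d -> 'I_r} -> R) * ('I_d -> 'I_r -> 'I_n -> R))%type.

Definition Pok (p : Par) : Prop :=
  [/\ (forall i k, vnorm2 (p.2 i k) <= Rb),
      (forall i k k', k != k' -> `|vdot (p.2 i k) (p.2 i k')| <= mu),
      Num.sqrt (\sum_k p.1 k ^+ 2) = 1,
      (forall (i : 'I_d) (p0 q : 'I_r), p0 != q ->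
         \sum_(k : {ffun 'I_d -> 'I_r} | k i == p0) p.1 k * p.1 (kset k i q) = 0)
    & theta <= frob (Phi p.1 p.2)].

Definition s1 : R := Num.sqrt (Rb ^+ 2 + mu * r%:R).
Definition s2 : R := Num.sqrt (Rb ^+ 2 + mu * (r ^ d)%:R).
Definition KC : R := (d.+1)%:R / eps * s1 ^+ d.
Definition KU : R := (d.+1)%:R / eps * (s2 * Rb ^+ (d - 1)).
Definition hC : R := (KC * Num.sqrt (r ^ d)%:R)^-1.
Definition hU : R := Rb / (KU * Num.sqrt n%:R).
Definition MM : nat := Num.truncn (hC^-1 + Rb / hU).

Definition Dc := ({ffun 'I_d -> 'I_r} + ('I_d * 'I_r * 'I_n))%type.

Definition xv (p : Par) (c : Dc) : R :=
  match c with inl k => p.1 k | inr ikj => p.2 ikj.1.1 ikj.1.2 ikj.2 end.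
Definition hh (c : Dc) : R := match c with inl _ => hC | inr _ => hU end.
Definition Kc (c : Dc) : R := match c with inl _ => KC | inr _ => KU end.
Definition rho (c : Dc) : R := match c with inl _ => 1 | inr _ => Rb end.

Definition enc (x h : R) : bool * 'I_MM.+1 := (x < 0, inord (Num.truncn (`|x| / h))).
Definition key (p : Par) : {ffun Dc -> bool * 'I_MM.+1} := [ffun c => enc (xv p c) (hh c)].

Lemma s1_ge1 : 1 <= s1.
Proof.
have h1 : 1 <= Rb ^+ 2 := exprn_ege1 2 hR.
have h2 : 0 <= mu * r%:R by apply: mulr_ge0; [exact: ltW | exact: ler0n].
rewrite /s1 -{1}sqrtr1 ler_sqrt; lra.
Qed.

Lemma s2_ge1 : 1 <= s2.
Proof.
have h1 : 1 <= Rb ^+ 2 := exprn_ege1 2 hR.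
have h2 : 0 <= mu * (r ^ d)%:R by apply: mulr_ge0; [exact: ltW | exact: ler0n].
rewrite /s2 -{1}sqrtr1 ler_sqrt; lra.
Qed.

Lemma d1_over_eps : 2 <= (d.+1)%:R / eps.
Proof.
rewrite ler_pdivlMr //; apply: (@le_trans _ _ 2).
  by rewrite -[X in _ <= X]mulr1 ler_wpM2l ?ltW.
by rewrite ler_nat ltnS.
Qed.

Lemma KC_ge2 : 2 <= KC.
Proof.
rewrite /KC; apply: le_trans d1_over_eps _.
rewrite -[X in X <= _]mulr1 ler_wpM2l //; first by apply: le_trans d1_over_eps; rewrite ler0n.
by rewrite exprn_ege1 // s1_ge1.
Qed.

Lemma KU_ge2 : 2 <= KU.
Proof.
rewrite /KU; apply: le_trans d1_over_eps _.
rewrite -[X in X <= _]mulr1 ler_wpM2l //; first by apply: le_trans d1_over_eps; rewrite ler0n.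
by rewrite -[1]mulr1 ler_pM // ?s2_ge1 ?exprn_ege1 //.
Qed.


Lemma hC_gt0 : 0 < hC.
Proof.
rewrite /hC invr_gt0 mulr_gt0 //; first by apply: lt_le_trans KC_ge2.
by rewrite sqrtr_gt0 ltr0n expn_gt0 hr.
Qed.

Lemma hU_gt0 : 0 < hU.
Proof.
rewrite /hU divr_gt0 // mulr_gt0 //; first by apply: lt_le_trans KU_ge2.
by rewrite sqrtr_gt0 ltr0n.
Qed.

Lemma term_le_sum (I : finType) (F : I -> R) i :
  (forall j, 0 <= F j) -> F i <= \sum_j F j.
Proof.
move=> F0; rewrite (bigD1 i) //= lerDl; by apply: sumr_ge0 => j _.
Qed.

Lemma sq_le_abs (x c : R) : 0 <= c -> x ^+ 2 <= c ^+ 2 -> `|x| <= c.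
Proof.
by move=> c0 h; rewrite -(@ler_pXn2r _ 2) ?nnegrE // real_normK ?num_real.
Qed.

Lemma sqrt_le_sq (a c : R) : 0 <= a -> 0 <= c -> Num.sqrt a <= c -> a <= c ^+ 2.
Proof.
move=> a0 c0 h; rewrite -(sqr_sqrtr a0); rewrite lerXn2r ?nnegrE ?sqrtr_ge0 //.
Qed.

Lemma Pok_C p : Pok p -> \sum_k p.1 k ^+ 2 = 1.
Proof.
case=> _ _ h _ _; have s0 : 0 <= \sum_k p.1 k ^+ 2 by apply: sumr_ge0 => k _; exact: sqr_ge0.
by rewrite -(sqr_sqrtr s0) h expr1n.
Qed.

Lemma Pok_col p i k : Pok p -> \sum_j p.2 i k j ^+ 2 <= Rb ^+ 2.
Proof.
case=> h _ _ _ _; apply: sqrt_le_sq (ltW R0) _.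
  by apply: sumr_ge0 => j _; exact: sqr_ge0.
exact: h.
Qed.

Lemma xv_bound p c : Pok p -> `|xv p c| <= rho c.
Proof.
move=> hp; case: c => [k|[[i k] j]] /=.
  apply: sq_le_abs; first exact: ler01.
  rewrite expr1n -(Pok_C hp); apply: (@term_le_sum _ (fun k0 => p.1 k0 ^+ 2) k) => k0.
  exact: sqr_ge0.
apply: sq_le_abs; first exact: ltW.
apply: le_trans (Pok_col i k hp); apply: (@term_le_sum _ (fun j0 => p.2 i k j0 ^+ 2) j) => j0.
exact: sqr_ge0.
Qed.

Lemma hh_gt0 c : 0 < hh c.
Proof. by case: c => [k|x]; [exact: hC_gt0 | exact: hU_gt0]. Qed.

Lemma trunc_le p c : Pok p -> (Num.truncn (`|xv p c| / hh c) <= MM)%N.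
Proof.
move=> hp; rewrite /MM; apply: le_truncn.
apply: (@le_trans _ _ (rho c / hh c)).
  by rewrite ler_pM2r ?invr_gt0 ?hh_gt0 // xv_bound.
have a0 : 0 <= hC^-1 by rewrite invr_ge0 ltW // hC_gt0.
have b0 : 0 <= Rb / hU by rewrite divr_ge0 ?ltW // hU_gt0.
case: c => [k|x] /=; first by rewrite mul1r lerDl.
by rewrite lerDr.
Qed.

Lemma key_val p c : Pok p -> nat_of_ord (key p c).2 = Num.truncn (`|xv p c| / hh c).
Proof. by move=> hp; rewrite /key ffunE /= inordK // ltnS trunc_le. Qed.

Lemma close p p' c : Pok p -> Pok p' -> key p = key p' ->
  `|xv p c - xv p' c| < hh c.
Proof.
move=> hp hp' kk.
have e : key p c = key p' c by rewrite kk.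
have s : (xv p c < 0) = (xv p' c < 0) by move: e; rewrite /key !ffunE /enc => -[].
have t : Num.truncn (`|xv p c| / hh c) = Num.truncn (`|xv p' c| / hh c).
  by rewrite -!key_val // e.
set x := xv p c in s t *; set y := xv p' c in s t *; set h := hh c.
have h0 : 0 < h := hh_gt0 c.
have [lx ux] := andP (truncn_itv (divr_ge0 (normr_ge0 x) (ltW h0))).
have [ly uy] := andP (truncn_itv (divr_ge0 (normr_ge0 y) (ltW h0))).
rewrite t in lx ux.
set k := (Num.truncn _)%:R in lx ux ly uy.
rewrite -natr1 in ux uy.
rewrite ler_pdivlMr // in lx; rewrite ler_pdivlMr // in ly.
rewrite ltr_pdivrMr // in ux; rewrite ltr_pdivrMr // in uy.
have hxy : `| `|x| - `|y| | < h.
  rewrite ltr_norml; apply/andP; split; nra.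
case: (ltP x 0) s => xs /esym ys.
  by rewrite (ltr0_norm xs) (ltr0_norm ys) opprK addrC in hxy; rewrite -normrN opprB.
have ys2 : 0 <= y by rewrite leNgt ys.
by rewrite (ger0_norm xs) (ger0_norm ys2) in hxy.
Qed.

Lemma card_Dc : #|{: Dc}| = (r ^ d + d * r * n)%N.
Proof. by rewrite card_sum card_ffun !card_prod !card_ord. Qed.

Lemma KC_gt0 : 0 < KC. Proof. by apply: lt_le_trans KC_ge2. Qed.
Lemma KU_gt0 : 0 < KU. Proof. by apply: lt_le_trans KU_ge2. Qed.
Lemma Kc_gt0 c : 0 < Kc c. Proof. by case: c => [k|x]; [exact: KC_gt0 | exact: KU_gt0]. Qed.

Lemma wC : ((hC * KC)^-1) ^+ 2 = (r ^ d)%:R.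
Proof.
have -> : hC * KC = (Num.sqrt (r ^ d)%:R)^-1.
  by rewrite /hC invfM mulrAC mulVf ?mul1r // gt_eqF // KC_gt0.
by rewrite invrK sqr_sqrtr ?ler0n.
Qed.

Lemma wU : ((hU * KU)^-1) ^+ 2 = n%:R / Rb ^+ 2.
Proof.
have S0 : 0 < Num.sqrt n%:R :> R by rewrite sqrtr_gt0 ltr0n.
have -> : hU * KU = Rb / Num.sqrt n%:R.
  by rewrite /hU; field; rewrite !gt_eqF // KU_gt0.
by rewrite invf_div expr_div_n sqr_sqrtr ?ler0n.
Qed.

Lemma chern p : Pok p ->
  \sum_(c : Dc) ((nat_of_ord (key p c).2)%:R / Kc c) ^+ 2 <= #|{: Dc}|%:R.
Proof.
move=> hp.
have step : forall c, ((nat_of_ord (key p c).2)%:R / Kc c) ^+ 2 <=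
    xv p c ^+ 2 * ((hh c * Kc c)^-1) ^+ 2.
  move=> c; rewrite key_val //.
  have h0 := hh_gt0 c; have K0 := Kc_gt0 c.
  have t1 : (Num.truncn (`|xv p c| / hh c))%:R <= `|xv p c| / hh c.
    by rewrite truncn_le; apply: divr_ge0 => //; exact: ltW.
  rewrite -[xv p c ^+ 2]real_normK ?num_real // -exprMn.
  apply: lerXn2r.
  - by rewrite nnegrE; apply: divr_ge0 => //; exact: ltW.
  - by rewrite nnegrE; apply: mulr_ge0 => //; rewrite invr_ge0; apply: mulr_ge0; exact: ltW.
  - by rewrite invfM mulrA ler_pM2r ?invr_gt0.
apply: le_trans (ler_sum _ (fun c _ => step c)) _.
rewrite big_sumType /= wC wU card_Dc natrD.
apply: lerD.
  by rewrite -mulr_suml (Pok_C hp) mul1r.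
rewrite -mulr_suml.
have -> : \sum_(x : 'I_d * 'I_r * 'I_n) p.2 x.1.1 x.1.2 x.2 ^+ 2 =
          \sum_(ab : 'I_d * 'I_r) \sum_(j : 'I_n) p.2 ab.1 ab.2 j ^+ 2.
  by rewrite -(pair_bigA _ (fun (ab : 'I_d * 'I_r) (j : 'I_n) => p.2 ab.1 ab.2 j ^+ 2)).
apply: (@le_trans _ _ ((\sum_(ab : 'I_d * 'I_r) Rb ^+ 2) * (n%:R / Rb ^+ 2))).
  apply: ler_wpM2r; first by rewrite divr_ge0 ?ler0n ?sqr_ge0.
  by apply: ler_sum => ab _; exact: Pok_col.
rewrite sumr_const card_prod !card_ord -mulr_natr natrM.
have Rb2 : Rb ^+ 2 != 0 by rewrite gt_eqF // exprn_gt0.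
rewrite le_eqVlt; apply/orP; left; apply/eqP; field.
by rewrite gt_eqF.
Qed.

Definition KeySet : {set {ffun Dc -> bool * 'I_MM.+1}} :=
  [set z | `[< exists p, Pok p /\ key p = z >]].

Lemma count_bound : (#|KeySet|)%:R <= \prod_(c : Dc) (6 * Kc c).
Proof.
set w := fun (c : Dc) (y : bool * 'I_MM.+1) => gauss_fun (cc R * (nat_of_ord y.2)%:R / Kc c).
set E := \prod_(c : Dc) expR (cc R ^+ 2).
have w0 : forall c y, 0 <= w c y by move=> c y; exact: gauss_fun_ge0.
have E0 : 0 <= E by apply: prodr_ge0 => c _; exact: expR_ge0.
have one_le : forall z, z \in KeySet -> 1 <= E * \prod_(c : Dc) w c (z c).
  move=> z; rewrite inE => /asboolP [p [hp <-]].
  rewrite /E -big_split /=.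
  have -> : \prod_(c : Dc) (expR (cc R ^+ 2) * w c (key p c)) =
            expR (\sum_(c : Dc) (cc R ^+ 2 - (cc R * (nat_of_ord (key p c).2)%:R / Kc c) ^+ 2)).
    rewrite expR_sum; apply: eq_bigr => c _; rewrite /w /gauss_fun -expRD.
    by congr expR.
  apply: le_trans (expR_ge1Dx _); rewrite lerDl.
  rewrite sumrB sumr_const.
  have -> : \sum_(c : Dc) (cc R * (nat_of_ord (key p c).2)%:R / Kc c) ^+ 2 =
            cc R ^+ 2 * \sum_(c : Dc) ((nat_of_ord (key p c).2)%:R / Kc c) ^+ 2.
    by rewrite mulr_sumr; apply: eq_bigr => c _; rewrite -exprMn mulrA.
  rewrite subr_ge0 -mulr_natr ler_wpM2l ?sqr_ge0 //.
  exact: chern.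
rewrite -sum1_card natr_sum.
apply: (@le_trans _ _ (\sum_(z in KeySet) E * \prod_(c : Dc) w c (z c))).
  by apply: ler_sum => z zK; exact: one_le.
apply: (@le_trans _ _ (\sum_(z : {ffun Dc -> bool * 'I_MM.+1}) E * \prod_(c : Dc) w c (z c))).
  rewrite [X in _ <= X](bigID (mem KeySet)) /= lerDl.
  by apply: sumr_ge0 => z _; apply: mulr_ge0 => //; apply: prodr_ge0.
rewrite -mulr_sumr -(bigA_distr_bigA w) /E -big_split /=.
apply: ler_prod => c _; apply/andP; split.
  by apply: mulr_ge0; [exact: expR_ge0 | apply: sumr_ge0].
apply: (coord_factor (@gauss_sum R) (@pi_lt165 R)).
case: c => [k|x] /=; [exact: KC_ge2 | exact: KU_ge2].
Qed.

Lemma sqrt_le_of_sq (X Y : R) : 0 <= Y -> X <= Y ^+ 2 -> Num.sqrt X <= Y.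
Proof.
move=> Y0 h; apply: (@le_trans _ _ (Num.sqrt (Y ^+ 2))).
  case: (lerP 0 X) => X0; first by rewrite ler_sqrt // sqr_ge0.
  by rewrite ltr0_sqrtr // sqrtr_ge0.
by rewrite sqrtr_sqr ger0_norm.
Qed.

Lemma Pok_gram p i : Pok p -> gram_ok Rb mu (p.2 i).
Proof.
move=> hp; split.
  move=> q; rewrite /vdot; under eq_bigr do rewrite -expr2; exact: Pok_col.
by case: hp => _ h _ _ _ q q' qq; apply: h.
Qed.

Lemma L2_le : L2 r Rb mu <= Rb ^+ 2 + mu * r%:R.
Proof.
rewrite /L2 lerD2l mulrC; apply: ler_wpM2l; first exact: ltW.
by rewrite ler_nat; exact: leq_pred.
Qed.

Lemma L2_ge0' : 0 <= L2 r Rb mu.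
Proof. by rewrite /L2 addr_ge0 ?sqr_ge0 // mulr_ge0 // ltW. Qed.

Lemma bound1 : Num.sqrt (L2 r Rb mu ^+ d * ((r ^ d)%:R * hC ^+ 2)) <= eps / (d.+1)%:R.
Proof.
apply: sqrt_le_of_sq; first by rewrite divr_ge0 ?ltW.
have -> : (r ^ d)%:R * hC ^+ 2 = KC ^-2.
  rewrite /hC exprVn exprMn sqr_sqrtr ?ler0n // invfM mulrA mulrAC divff ?mul1r //.
  by rewrite gt_eqF // ltr0n expn_gt0 hr.
have -> : eps / (d.+1)%:R = s1 ^+ d / KC.
  rewrite /KC; field; rewrite !gt_eqF ?ltr0n //.
  by rewrite exprn_gt0 //; apply: lt_le_trans s1_ge1; rewrite ltr01.
rewrite expr_div_n ler_pM2r ?invr_gt0 ?exprn_gt0 ?KC_gt0 //.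
rewrite -exprM mulnC exprM /s1 sqr_sqrtr; last by rewrite addr_ge0 ?sqr_ge0 // mulr_ge0 // ltW.
by apply: lerXn2r; rewrite ?nnegrE ?L2_ge0' ?L2_le // addr_ge0 ?sqr_ge0 // mulr_ge0 // ltW.
Qed.

Lemma bound2 : Num.sqrt (L2 r Rb mu ^+ d.-1 * ((n%:R * hU ^+ 2) * 1)) <= eps / (d.+1)%:R.
Proof.
apply: sqrt_le_of_sq; first by rewrite divr_ge0 ?ltW.
rewrite mulr1.
have -> : n%:R * hU ^+ 2 = Rb ^+ 2 / KU ^+ 2.
  rewrite /hU expr_div_n exprMn sqr_sqrtr ?ler0n //; field.
  by rewrite !gt_eqF ?ltr0n ?KU_gt0.
have -> : eps / (d.+1)%:R = (s2 * Rb ^+ (d - 1)) / KU.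
  rewrite /KU; field; rewrite !gt_eqF ?ltr0n //.
  - by apply: lt_le_trans s2_ge1; rewrite ltr01.
  - by rewrite exprn_gt0.
rewrite expr_div_n mulrA ler_pM2r ?invr_gt0 ?exprn_gt0 ?KU_gt0 //.
rewrite exprMn /s2 sqr_sqrtr; last by rewrite addr_ge0 ?sqr_ge0 // mulr_ge0 // ltW.
rewrite -exprM mulnC exprM subn1.
have := @key_ineq R (Rb ^+ 2) mu r d.-1.
rewrite prednK //; apply.
- exact: exprn_ege1.
- by rewrite !ltW.
- exact: hr.
Qed.

Lemma lip p p' : Pok p -> Pok p' -> key p = key p' ->
  frob (fun idx => Phi p.1 p.2 idx - Phi p'.1 p'.2 idx) <= eps.
Proof.
move=> hp hp' kk.
have r0 : 'I_r := Ordinal hr.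
have mu0 : 0 <= mu by exact: ltW.
change (nrm (fun idx => Phi p.1 p.2 idx - Phi p'.1 p'.2 idx) <= eps).
rewrite (nrm_ext (g := fun idx => Phi (fun k => p.1 k - p'.1 k) p.2 idx +
    \sum_(t < d) Phi p'.1 (wv p.2 p'.2 t) idx)); last by move=> idx; exact: phi_telescope.
apply: le_trans (nrm_add _ _) _.
apply: le_trans (lerD (lexx _) (nrm_big _ _)) _.
have B1 : nrm (fun idx => Phi (fun k => p.1 k - p'.1 k) p.2 idx) <= eps / (d.+1)%:R.
  apply: le_trans bound1; apply: nrm_le.
    by rewrite mulr_ge0 ?exprn_ge0 ?L2_ge0' // mulr_ge0 ?sqr_ge0.
  apply: le_trans (N1 _ (fun i => Pok_gram i hp)) _.
  apply: ler_wpM2l; first by rewrite exprn_ge0 ?L2_ge0'.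
  apply: (@le_trans _ _ (\sum_(k : {ffun 'I_d -> 'I_r}) hC ^+ 2)).
    apply: ler_sum => k _; rewrite -real_normK ?num_real //.
    apply: ltW; rewrite ltr_pXn2r ?nnegrE ?normr_ge0 ?(ltW hC_gt0) //.
    exact: (@close p p' (inl k)).
  by rewrite sumr_const card_ffun !card_ord mulr_natl.
have B2 : forall t : 'I_d, nrm (Phi p'.1 (wv p.2 p'.2 t)) <= eps / (d.+1)%:R.
  move=> t; apply: le_trans bound2; apply: nrm_le.
    by rewrite mulr_ge0 ?exprn_ge0 ?L2_ge0' // mulr_ge0 ?ler01 // mulr_ge0 ?sqr_ge0.
  have h := @N2 R d n r Rb mu mu0 t r0 p'.1 (wv p.2 p'.2 t) (n%:R * hU ^+ 2).
  rewrite (Pok_C hp') in h; apply: h.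
  - by move=> q q' qq; case: hp' => _ _ _ horth _; exact: horth.
  - move=> q; rewrite /wv ltnn eqxx /vdot.
    apply: (@le_trans _ _ (\sum_(j < n) hU ^+ 2)); last first.
      by rewrite sumr_const card_ord mulr_natl.
    apply: ler_sum => j _; rewrite -expr2 -real_normK ?num_real //.
    apply: ltW; rewrite ltr_pXn2r ?nnegrE ?normr_ge0 ?(ltW hU_gt0) //.
    exact: (@close p p' (inr (t, q, j))).
  - move=> i it; rewrite /wv; case: (i < t)%N; first exact: Pok_gram.
    by rewrite (negPf it); exact: Pok_gram.
apply: le_trans (lerD B1 (ler_sum _ (fun t _ => B2 t))) _.
rewrite sumr_const card_ord -mulr_natl.
rewrite le_eqVlt; apply/orP; left; apply/eqP.
by field; rewrite gt_eqF // ltr0n.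
Qed.

Lemma powR_half (x : R) (m : nat) : 0 <= x -> x `^ (m%:R / 2) = Num.sqrt x ^+ m.
Proof.
move=> x0; rewrite mulrC powRrM powR12_sqrt // powR_mulrn //; exact: sqrtr_ge0.
Qed.

Lemma bound_eq :
  \prod_(c : Dc) (6 * Kc c) =
  (6 * (d.+1)%:R / eps) ^+ (r ^ d + r * n * d)%N
    * (Rb ^+ 2 + mu * r%:R) `^ (((r ^ d) * d)%N%:R / 2)
    * (Rb ^+ 2 + mu * (r ^ d)%N%:R) `^ ((d * n * r)%N%:R / 2)
    * Rb ^+ ((d - 1) * d * n * r)%N.
Proof.
have m0' : 0 <= mu := ltW m0.
rewrite !powR_half; last 2 first.
  by rewrite addr_ge0 ?sqr_ge0 // mulr_ge0.
  by rewrite addr_ge0 ?sqr_ge0 // mulr_ge0.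
rewrite big_sumType /= !prodr_const card_ffun !card_prod !card_ord.
rewrite /KC /KU -/s1 -/s2.
set A := 6 * (d.+1)%:R / eps.
have -> : 6 * ((d.+1)%:R / eps * s1 ^+ d) = A * s1 ^+ d by rewrite /A !mulrA.
have -> : 6 * ((d.+1)%:R / eps * (s2 * Rb ^+ (d - 1))) = A * (s2 * Rb ^+ (d - 1)) by rewrite /A !mulrA.
rewrite !exprMn -!exprM.
have -> : (r * n * d)%N = (d * r * n)%N by rewrite mulnC mulnA.
have -> : (r ^ d * d)%N = (d * r ^ d)%N by rewrite mulnC.
have -> : (d * n * r)%N = (d * r * n)%N by rewrite -!mulnA (mulnC n).
have -> : ((d - 1) * d * n * r)%N = ((d - 1) * (d * r * n))%N by rewrite -!mulnA (mulnC n r).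
rewrite !exprD; ring.
Qed.

Definition p_zero : Par := (fun _ => 0, fun _ _ _ => 0).

Definition rep (z : {ffun Dc -> bool * 'I_MM.+1}) : Par :=
  match pselect (exists p, Pok p /\ key p = z) with
  | left h => proj1_sig (cid h)
  | right _ => p_zero
  end.

Lemma rep_spec z : z \in KeySet -> Pok (rep z) /\ key (rep z) = z.
Proof.
rewrite inE => /asboolP h; rewrite /rep; case: pselect => [h'|//].
exact: (proj2_sig (cid h')).
Qed.

Lemma frob_ext (X Y : tensor R d n) : (forall idx, X idx = Y idx) -> frob X = frob Y.
Proof. by move=> h; rewrite /frob; congr Num.sqrt; apply: eq_bigr => idx _; rewrite h. Qed.

Lemma main :
  (covering_number (@Bset R d n r Rb mu theta) eps <=
   ((6 * (d.+1)%:R / eps) ^+ (r ^ d + r * n * d)%N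
    * (Rb ^+ 2 + mu * r%:R) `^ (((r ^ d) * d)%N%:R / 2)
    * (Rb ^+ 2 + mu * (r ^ d)%N%:R) `^ ((d * n * r)%N%:R / 2)
    * Rb ^+ ((d - 1) * d * n * r)%N)%:E)%E.
Proof.
rewrite -bound_eq.
pose Ncov := fun (j : 'I_#|KeySet|) =>
  (Phi (rep (enum_val j)).1 (rep (enum_val j)).2 : tensor R d n).
have cov : is_cover (@Bset R d n r Rb mu theta) eps Ncov.
  split.
    move=> j; have [[hb hc hs ho hf] _] := rep_spec (enum_valP j).
    exists (rep (enum_val j)).1, (rep (enum_val j)).2; split => //.
  move=> X [C [u [hX hb hc [hs ho] hf]]].
  have hp : Pok (C, u).
    split => //=; by rewrite -(frob_ext hX).
  have kin : key (C, u) \in KeySet by rewrite inE; apply/asboolP; exists (C, u).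
  exists (enum_rank_in kin (key (C, u))).
  rewrite /Ncov enum_rankK_in //.
  have [hp' kk] := rep_spec kin.
  rewrite (frob_ext (Y := fun idx => Phi (C, u).1 (C, u).2 idx -
                              Phi (rep (key (C, u))).1 (rep (key (C, u))).2 idx)).
    by apply: lip => //; rewrite kk.
  by move=> idx; rewrite hX.
apply: (@le_trans _ _ ((#|KeySet|)%:R)%:E).
  by apply: ereal_inf_lbound; exists #|KeySet| => //; exists Ncov.
rewrite lee_fin; exact: count_bound.
Qed.
End Main.

Unset Implicit Arguments.
Theorem lemma2 (R : realType) (d n r : nat) (theta eps mu Rb : R) :
  (1 <= d)%N -> (1 <= n)%N -> (1 <= r)%N ->
  0 <= theta -> 0 < eps < 1 -> 0 < mu < 1 -> 1 <= Rb ->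
  (covering_number (@Bset R d n r Rb mu theta) eps <=
   ((6 * (d.+1)%:R / eps) ^+ (r ^ d + r * n * d)%N
    * (Rb ^+ 2 + mu * r%:R) `^ (((r ^ d) * d)%N%:R / 2)
    * (Rb ^+ 2 + mu * (r ^ d)%N%:R) `^ ((d * n * r)%N%:R / 2)
    * Rb ^+ ((d - 1) * d * n * r)%N)%:E)%E.
Proof. move=> hd hn hr ht he hm hR; exact: main. Qed.
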